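(* For every $n\ge0$, $$\{\varphi(R(\tau)):\tau\in Y_n\}=\{P\cup K(P): P\in\mathrm{NCP}_n\}.$$
   Context: Planar binary trees: $Y_0=\{|\}$, $Y_n=\{\sigma\vee\tau:\sigma\in Y_k,\tau\in Y_l,k+l=n-1\}$, $\sigma\vee\tau$ being the tree whose root has left subtree $\sigma$ and right subtree $\tau$; $Y=\bigcup_nY_n$. $R:Y\to Y$ is defined by $R(|)=|$, $R(\sigma\vee\tau)=(|\vee R(\sigma))\vee R(\tau)$. $\mathrm{NCP}_n$ is the set of noncrossing partitions of $[n]=\{1,\dots,n\}$ ($\mathrm{NCP}_0=\{\emptyset\}$), ordered by refinement ($P\le Q$ if every block of $P$ lies in a block of $Q$). For $P\in\mathrm{NCP}_m$, $Q\in\mathrm{NCP}_l$: $P*Q\in\mathrm{NCP}_{m+l}$ is the concatenation ($Q$ shifted by $m$); $P\,\underline*\,Q$ is obtained from $P*Q$ by merging the block of $P$ containing $m$ with the block containing $m+l$ (with $\emptyset*Q=Q$, $\emptyset\,\underline*\,Q=Q$, $P\,\underline*\,\emptyset=P$). $|$ denotes the unique partition of $[1]$. For partitions $P,Q$ of $[n]$, $P\cup Q$ is the partition of $[2n]$ whose blocks are $\{2i-1:i\in V\}$ for $V\in P$ and $\{2i:i\in W\}$ for $W\in Q$. The Kreweras complement $K(P)$ of $P\in\mathrm{NCP}_n$ is the largest $Q\in\mathrm{NCP}_n$ such that $P\cup Q$ is noncrossing. The bijection $\varphi:Y\to\mathrm{NCP}$ is defined by $\varphi(|)=\emptyset$ and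 $\varphi(\sigma\vee\tau)=\varphi(\sigma)*(|\,\underline*\,\varphi(\tau))$; equivalently, labelling the vertices of $\tau\in Y_n$ by $1,\dots,n$ in left-to-right order (vertices of left subtree, root, vertices of right subtree), the blocks of $\varphi(\tau)$ are the classes of the equivalence relation generated by ''$x$ is the right child of $y$''. *)

(* Defs.v *)
From HB Require Import structures.
From mathcomp Require Import all_boot all_order.
From mathcomp Require Import finmap.
Set Implicit Arguments. Unset Strict Implicit. Unset Printing Implicit Defensive.
Local Open Scope fset_scope.

Inductive tree : Type := Leaf : tree | Node : tree -> tree -> tree.
(* Node s t = s \vee t *)

(* number of internal vertices: tau \in Y_n iff tree_size tau = n *)
Fixpoint tree_size (t : tree) : nat :=
  match t with Leaf => 0 | Node s u => (tree_size s + tree_size u).+1 end.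

Fixpoint Rt (t : tree) : tree :=
  match t with Leaf => Leaf | Node s u => Node (Node Leaf (Rt s)) (Rt u) end.

Definition setpart := {fset {fset nat}}.

Definition is_partition (n : nat) (P : setpart) : Prop :=
  (forall B, B \in P -> B != fset0) /\
  (forall B, B \in P -> forall x, x \in B -> 1 <= x <= n) /\
  (forall x, 1 <= x <= n -> exists2 B, B \in P & x \in B) /\
  (forall B C x, B \in P -> C \in P -> x \in B -> x \in C -> B = C).

Definition noncrossing (P : setpart) : Prop :=
  forall B C a b c d, B \in P -> C \in P -> B <> C ->
    a < b -> b < c -> c < d ->
    a \in B -> c \in B -> b \in C -> d \in C -> False.

Definition NCP (n : nat) (P : setpart) : Prop := is_partition n P /\ noncrossing P.

Definition refines (P Q : setpart) : Prop :=
  forall B, B \in P -> exists2 C, C \in Q & B `<=` C.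

Definition shiftB (m : nat) (B : {fset nat}) : {fset nat} := [fset (x + m)%N | x in B].

Definition pconcat (m : nat) (P Q : setpart) : setpart :=
  P `|` [fset shiftB m B | B : {fset nat} in Q].

(* P _* Q for P a partition of [m], Q of [l]: merge block of m with block of m+l;
   with the conventions (empty) _* Q = Q and P _* (empty) = P *)
Definition pmerge (m l : nat) (P Q : setpart) : setpart :=
  if m == 0 then Q else if l == 0 then P else
  let S := pconcat m P Q in
  [fset B : {fset nat} in S | (m \notin B) && ((m + l)%N \notin B)]
    `|` [fset \bigcup_(B <- S | (m \in B) || ((m + l)%N \in B)) B].

Definition pone : setpart := [fset [fset 1]].

Fixpoint phi (t : tree) : setpart :=
  match t with
  | Leaf => fset0
  | Node s u => pconcat (tree_size s) (phi s) (pmerge 1 (tree_size u) pone (phi u))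
  end.

Definition pcup (P Q : setpart) : setpart :=
  [fset [fset ((2 * i).-1)%N | i in V] | V : {fset nat} in P] `|` [fset [fset (2 * i)%N | i in W] | W : {fset nat} in Q].

Definition is_kreweras (n : nat) (P Q : setpart) : Prop :=
  NCP n Q /\ noncrossing (pcup P Q) /\
  (forall Q', NCP n Q' -> noncrossing (pcup P Q') -> refines Q' Q).

(* Main.v *)
Require Import Defs.
From mathcomp Require Import all_boot all_order finmap zify.
From Stdlib Require Import Classical.
Set Implicit Arguments. Unset Strict Implicit. Unset Printing Implicit Defensive.

Definition sb (P : setpart) (x y : nat) : Prop :=
  exists2 B, B \in P & (x \in B) && (y \in B).

Definition req n (r s : nat -> nat -> Prop) : Prop :=
  forall x y, 0 < x -> x <= n -> 0 < y -> y <= n -> (r x y <-> s x y).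

Lemma sb_sym P x y : sb P x y -> sb P y x.
Proof. by case=> B BP /andP[h1 h2]; exists B => //; rewrite h1 h2. Qed.

Lemma sb_range n P x y : is_partition n P -> sb P x y -> 0 < x /\ x <= n /\ 0 < y /\ y <= n.
Proof.
move=> [_ [rg _]] [B BP /andP[xB yB]].
move: (rg B BP x xB) (rg B BP y yB) => /andP[? ?] /andP[? ?]; lia.
Qed.

Lemma sb_refl n P x : is_partition n P -> 0 < x -> x <= n -> sb P x x.
Proof.
move=> [_ [_ [cov _]]] h1 h2.
have [B BP xB] := cov x (introT andP (conj h1 h2)).
by exists B => //; rewrite xB.
Qed.

Lemma sb_trans n P x y z : is_partition n P -> sb P x y -> sb P y z -> sb P x z.
Proof.
move=> [_ [_ [_ dj]]] [B BP /andP[xB yB]] [C CP /andP[yC zC]].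
have E := dj _ _ _ BP CP yB yC. subst C.
by exists B => //; rewrite xB zC.
Qed.

Lemma part_incl n P P' : is_partition n P -> is_partition n P' -> req n (sb P) (sb P') ->
  forall B, B \in P -> B \in P'.
Proof.
move=> hP hP' H B BP.
have hP0 := hP. move: hP0 => [ne [rg [cov dj]]].
have hP1 := hP'. move: hP1 => [ne' [rg' [cov' dj']]].
have /fset0Pn [x xB] := ne B BP.
have /andP [x1 xn] := rg B BP x xB.
have [B' B'P xB'] := cov' x (introT andP (conj x1 xn)).
suff -> : B = B' by [].
apply/fsetP => y; apply/idP/idP => yin.
- have /andP [y1 yn] := rg B BP y yin.
  have hs : sb P x y by exists B => //; rewrite xB yin.
  have [C CP /andP [xC yC]] := (H _ _ x1 xn y1 yn).1 hs.
  by rewrite (dj' _ _ _ B'P CP xB' xC).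
- have /andP [y1 yn] := rg' B' B'P y yin.
  have hs : sb P' x y by exists B' => //; rewrite xB' yin.
  have [C CP /andP [xC yC]] := (H _ _ x1 xn y1 yn).2 hs.
  by rewrite (dj _ _ _ BP CP xB xC).
Qed.

Lemma part_eq n P P' : is_partition n P -> is_partition n P' -> req n (sb P) (sb P') -> P = P'.
Proof.
move=> hP hP' H; apply/fsetP => B; apply/idP/idP.
- move=> BP; exact: (part_incl hP hP' H BP).
- move=> BP'; apply: (part_incl hP' hP _ BP') => x y h1 h2 h3 h4; split; apply H => //.
Qed.

Lemma nc_sb P a b c d : noncrossing P -> a < b -> b < c -> c < d ->
  sb P a c -> sb P b d -> sb P a b.
Proof.
move=> nc h1 h2 h3 [B BP /andP[aB cB]] [C CP /andP[bC dC]].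
case: (eqVneq B C) => [E|ne].
- subst C; by exists B => //; rewrite aB bC.
- exfalso; apply: (nc B C a b c d) => //; exact/eqP.
Qed.

Lemma sb_nc n P : is_partition n P ->
  (forall a b c d, 0 < a -> a < b -> b < c -> c < d -> d <= n -> sb P a c -> sb P b d -> sb P a b) ->
  noncrossing P.
Proof.
move=> hP H B C a b c d BP CP ne h1 h2 h3 aB cB bC dC.
have hac : sb P a c by exists B => //; rewrite aB cB.
have hbd : sb P b d by exists C => //; rewrite bC dC.
have [a0 _] := sb_range hP hac.
have [_ [_ [_ dn]]] := sb_range hP hbd.
have [D DP /andP[aD bD]] := H a b c d a0 h1 h2 h3 dn hac hbd.
move: hP => [_ [_ [_ dj]]].
apply: ne; by rewrite (dj _ _ _ BP DP aB aD) (dj _ _ _ CP DP bC bD).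
Qed.

Lemma sb_refines n Q' Q : is_partition n Q' -> is_partition n Q ->
  (forall x y, 0 < x -> x <= n -> 0 < y -> y <= n -> sb Q' x y -> sb Q x y) -> refines Q' Q.
Proof.
move=> hQ' hQ H B BP.
have hQ0 := hQ'. move: hQ0 => [ne [rg _]].
have hQ1 := hQ. move: hQ1 => [_ [_ [cov dj]]].
have /fset0Pn [x xB] := ne B BP.
have /andP [x1 xn] := rg B BP x xB.
have [C CP xC] := cov x (introT andP (conj x1 xn)).
exists C => //; apply/fsubsetP => y yB.
have /andP [y1 yn] := rg B BP y yB.
have hs : sb Q' x y by exists B => //; rewrite xB yB.
have [D DP /andP [xD yD]] := H _ _ x1 xn y1 yn hs.
by rewrite (dj _ _ _ CP DP xC xD).
Qed.

Lemma refines_sb Q' Q x y : refines Q' Q -> sb Q' x y -> sb Q x y.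
Proof.
move=> H [B BP /andP[xB yB]]; have [C CP /fsubsetP sub] := H B BP.
by exists C => //; rewrite !sub.
Qed.

Definition good n (r : nat -> nat -> Prop) : Prop :=
 (forall x, 0 < x -> x <= n -> r x x) /\
 (forall x y, 0 < x -> x <= n -> 0 < y -> y <= n -> r x y -> r y x) /\
 (forall x y z, 0 < x -> x <= n -> 0 < y -> y <= n -> 0 < z -> z <= n -> r x y -> r y z -> r x z) /\
 (forall a b c d, 0 < a -> a < b -> b < c -> c < d -> d <= n -> r a c -> r b d -> r a b).

Definition rcat m (r s : nat -> nat -> Prop) x y : Prop :=
  (x <= m /\ y <= m /\ r x y) \/ (m < x /\ m < y /\ s (x - m) (y - m)).

Definition mrg l (s : nat -> nat -> Prop) x y : Prop :=
  if x == 1 then (if y == 1 then True else s (y - 1) l)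
  else (if y == 1 then s (x - 1) l else s (x - 1) (y - 1)).

Lemma good_req n r s : good n r -> req n r s -> good n s.
Proof.
move=> [rf [sy [tr nc]]] E; split; [|split; [|split]].
- move=> x h1 h2; apply/E => //; exact: rf.
- move=> x y h1 h2 h3 h4 /E H; apply/E => //; exact: sy (H _ _ _ _).
- move=> x y z h1 h2 h3 h4 h5 h6 /E H1 /E H2; apply/E => //; exact: tr (H1 _ _ _ _) (H2 _ _ _ _).
- move=> a b c d h1 h2 h3 h4 h5 /E H1 /E H2; apply/E; try lia.
  apply: nc (H1 _ _ _ _) (H2 _ _ _ _); lia.
Qed.

Lemma cat_good m l r s : good m r -> good l s -> good (m + l) (rcat m r s).
Proof.
move=> [rf [sy [tr nc]]] [rf' [sy' [tr' nc']]]; split; [|split; [|split]].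
- move=> x h1 h2; case: (leqP x m) => hx; [left|right].
  + by split => //; split => //; apply: rf.
  + by split => //; split => //; apply: rf'; lia.
- move=> x y h1 h2 h3 h4 [[a [b c]]|[a [b c]]]; [left|right].
  + by split => //; split => //; apply: sy.
  + split => //; split => //; apply: sy' => //; lia.
- move=> x y z h1 h2 h3 h4 h5 h6 [[a [b c]]|[a [b c]]] [[a' [b' c']]|[a' [b' c']]]; try lia.
  + by left; split => //; split => //; apply: tr c c'.
  + right; split => //; split => //; apply: tr' c c'; lia.
- move=> a b c d h1 h2 h3 h4 h5 [[a1 [b1 c1]]|[a1 [b1 c1]]] [[a2 [b2 c2]]|[a2 [b2 c2]]]; try lia.
  + left; split; first lia; split; first lia; apply: nc c1 c2; lia.
  + right; split; first lia; split; first lia; apply: nc' c1 c2; lia.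
Qed.

Ltac mcase x := let h := fresh "hx" in
  have [h|h] := eqVneq x 1; [subst x|]; rewrite /mrg ?eqxx ?(negbTE h) /=.

Lemma mrg_good l s : good l s -> good l.+1 (mrg l s).
Proof.
move=> [rf [sy [tr nc]]]; split; [|split; [|split]].
- move=> x h1 h2; mcase x => //; apply: rf; lia.
- move=> x y h1 h2 h3 h4; mcase x; mcase y => // H; apply: sy => //; lia.
- move=> x y z h1 h2 h3 h4 h5 h6; mcase x; mcase y; mcase z => //.
  + move=> H1 H2; apply: tr (sy _ _ _ _ _ _ H2) H1; lia.
  + move=> H1 H2; apply: tr H1 (sy _ _ _ _ _ _ H2); lia.
  + move=> H1 H2; apply: tr H1 H2; lia.
  + move=> H1 H2; apply: tr H1 H2; lia.
- move=> a b c d h1 h2 h3 h4 h5.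
  have hb : b != 1 by apply/eqP; lia.
  have hc : c != 1 by apply/eqP; lia.
  have hd : d != 1 by apply/eqP; lia.
  rewrite /mrg (negbTE hb) (negbTE hc) (negbTE hd).
  have [ha|ha] := eqVneq a 1; rewrite ?ha ?eqxx ?(negbTE ha) /=.
  + move=> H1 H2; have [E|ne] := eqVneq d l.+1.
    * subst d; by move: H2; rewrite subSS subn0.
    * have H3 : s (b - 1) (c - 1) by apply: nc H2 H1; lia.
      apply: tr H3 H1; lia.
  + move=> H1 H2; apply: nc H1 H2; lia.
Qed.

Lemma cat_req m l r r' s s' : req m r r' -> req l s s' -> req (m + l) (rcat m r s) (rcat m r' s').
Proof.
move=> E1 E2 x y h1 h2 h3 h4; rewrite /rcat; split.
- case=> [[a [b c]]|[a [b c]]]; [left|right]; do 2 (split => //).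
  + by apply/E1.
  + apply/E2 => //; lia.
- case=> [[a [b c]]|[a [b c]]]; [left|right]; do 2 (split => //).
  + by apply/E1.
  + apply/E2 => //; lia.
Qed.

Lemma mrg_req l s s' : req l s s' -> req l.+1 (mrg l s) (mrg l s').
Proof.
move=> E x y h1 h2 h3 h4; mcase x; mcase y => //; apply: E; lia.
Qed.

Definition mergeS a b (S : setpart) : setpart :=
  ([fset B : {fset nat} in S | (a \notin B) && (b \notin B)]
   `|` [fset \bigcup_(B <- S | (a \in B) || (b \in B)) B])%fset.

Lemma in_pconcat m P Q B : B \in pconcat m P Q <-> B \in P \/ exists2 C, C \in Q & B = shiftB m C.
Proof.
rewrite /pconcat in_fsetU; split.
- case/orP => [h|/imfsetP [C CQ E]]; [by left|right; by exists C].
- case=> [->//|[C CQ ->]]; apply/orP; right; by apply/imfsetP; exists C.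
Qed.

Lemma in_shiftB m C x : x \in shiftB m C <-> exists2 y, y \in C & x = y + m.
Proof.
split; first by move/imfsetP => [y yC ->]; exists y.
by move=> [y yC ->]; apply/imfsetP; exists y.
Qed.

Lemma pconcat_part m l P Q : is_partition m P -> is_partition l Q ->
  is_partition (m + l) (pconcat m P Q).
Proof.
move=> [ne [rg [cov dj]]] [ne' [rg' [cov' dj']]]; split; [|split; [|split]].
- move=> B /in_pconcat [BP|[C CQ ->]]; first exact: ne.
  have /fset0Pn [x xC] := ne' C CQ; apply/fset0Pn; exists (x + m); apply/in_shiftB; by exists x.
- move=> B /in_pconcat [BP|[C CQ ->]] x.
  + move=> /(rg B BP x) /andP [? ?]; apply/andP; lia.
  + move=> /in_shiftB [y yC ->]; move: (rg' C CQ y yC) => /andP [? ?]; apply/andP; lia.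
- move=> x /andP [h1 h2]; case: (leqP x m) => hx.
  + have [B BP xB] := cov x (introT andP (conj h1 hx)); exists B => //; apply/in_pconcat; by left.
  + have h3 : 0 < x - m by lia.
    have h4 : x - m <= l by lia.
    have [C CQ xC] := cov' (x - m) (introT andP (conj h3 h4)).
    exists (shiftB m C); first by apply/in_pconcat; right; exists C.
    apply/in_shiftB; exists (x - m) => //; lia.
- move=> B C x /in_pconcat [BP|[B' B'Q ->]] /in_pconcat [CP|[C' C'Q ->]].
  + exact: dj.
  + move=> xB /in_shiftB [y yC' E]; move: (rg B BP x xB) (rg' C' C'Q y yC') => /andP [? ?] /andP [? ?]; lia.
  + move=> /in_shiftB [y yB' E] xC; move: (rg C CP x xC) (rg' B' B'Q y yB') => /andP [? ?] /andP [? ?]; lia.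
  + move=> /in_shiftB [y yB' E] /in_shiftB [z zC' E'].
    have yz : y = z by lia.
    subst z; by rewrite (dj' _ _ _ B'Q C'Q yB' zC').
Qed.

Lemma pconcat_sb m l P Q : is_partition m P -> is_partition l Q ->
  forall x y, sb (pconcat m P Q) x y <-> rcat m (sb P) (sb Q) x y.
Proof.
move=> hP hQ x y; split.
- move=> [B /in_pconcat [BP|[C CQ ->]] /andP [xB yB]].
  + have hs : sb P x y by exists B => //; rewrite xB yB.
    have := sb_range hP hs => ?; left; split; first lia; split; first lia; done.
  + move: xB yB => /in_shiftB [x' x'C ->] /in_shiftB [y' y'C ->].
    have hs : sb Q x' y' by exists C => //; rewrite x'C y'C.
    have := sb_range hQ hs => ?.
    right; split; first lia; split; first lia.
    by rewrite !addnK.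
- case=> [[h1 [h2 [B BP /andP [xB yB]]]]|[h1 [h2 [C CQ /andP [xC yC]]]]].
  + exists B; first by apply/in_pconcat; left. by rewrite xB yB.
  + exists (shiftB m C); first by apply/in_pconcat; right; exists C.
    apply/andP; split; apply/in_shiftB; [exists (x - m)|exists (y - m)] => //; lia.
Qed.

Lemma in_mergeS a b S B : B \in mergeS a b S <->
  (B \in S /\ a \notin B /\ b \notin B) \/ B = (\bigcup_(B <- S | (a \in B) || (b \in B)) B)%fset.
Proof.
rewrite /mergeS in_fsetU in_fset1 !inE /=; split.
- case/orP => [/andP [h /andP [h1 h2]]|/eqP ->]; [left|by right]; by [].
- case=> [[h [h1 h2]]|->]; apply/orP; [left|right => //].
  by rewrite h h1 h2.
Qed.

Lemma in_bigU a b (S : setpart) x : x \in (\bigcup_(B <- S | (a \in B) || (b \in B)) B)%fset <->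
  exists2 B, B \in S & ((a \in B) || (b \in B)) && (x \in B).
Proof.
split.
- move/bigfcupP => [B /andP [h1 h2] h3]; exists B => //; by rewrite h2 h3.
- move=> [B h1 /andP [h2 h3]]; apply/bigfcupP; exists B => //; by rewrite h1 h2.
Qed.

Lemma merge_part N a b S : is_partition N S -> 0 < a -> a <= N ->
  is_partition N (mergeS a b S).
Proof.
move=> hS ha1 ha2; have hS0 := hS; move: hS0 => [ne [rg [cov dj]]].
have [A0 A0S aA0] := cov a (introT andP (conj ha1 ha2)).
split; [|split; [|split]].
- move=> B /in_mergeS [[BS _]|->]; first exact: ne.
  apply/fset0Pn; exists a; apply/in_bigU; exists A0 => //; by rewrite aA0.
- move=> B /in_mergeS [[BS _]|->]; first exact: rg.
  move=> x /in_bigU [C CS /andP [_ xC]]; exact: rg C CS x xC.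
- move=> x hx; have [B BS xB] := cov x hx.
  case hab: ((a \in B) || (b \in B)).
  + exists (\bigcup_(B <- S | (a \in B) || (b \in B)) B)%fset; first by apply/in_mergeS; right.
    apply/in_bigU; exists B => //; by rewrite hab xB.
  + exists B => //; apply/in_mergeS; left; move/negbT: hab; rewrite negb_or => /andP [h1 h2]; by [].
- move=> B C x /in_mergeS [[BS [h1 h2]]|->] /in_mergeS [[CS [h1' h2']]|->] //.
  + exact: dj.
  + move=> xB /in_bigU [D DS /andP [hD xD]]; have E := dj _ _ _ BS DS xB xD; subst D.
    by move: hD; rewrite (negbTE h1) (negbTE h2).
  + move=> /in_bigU [D DS /andP [hD xD]] xC; have E := dj _ _ _ CS DS xC xD; subst D.
    by move: hD; rewrite (negbTE h1') (negbTE h2').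
Qed.

Lemma merge_sb N a b S : is_partition N S -> 0 < a -> a <= N -> forall x y,
  sb (mergeS a b S) x y <-> sb S x y \/ ((sb S x a \/ sb S x b) /\ (sb S y a \/ sb S y b)).
Proof.
move=> hS ha1 ha2 x y.
have cU : forall z, z \in (\bigcup_(B <- S | (a \in B) || (b \in B)) B)%fset -> sb S z a \/ sb S z b.
  move=> z /in_bigU [D DS /andP [/orP [hD|hD] zD]]; [left|right]; exists D => //; by rewrite zD hD.
have Uc : forall z, sb S z a \/ sb S z b -> z \in (\bigcup_(B <- S | (a \in B) || (b \in B)) B)%fset.
  move=> z [[D DS /andP [zD hD]]|[D DS /andP [zD hD]]]; apply/in_bigU; exists D => //; by rewrite zD hD ?orbT.
split.
- move=> [B /in_mergeS [[BS _]|->] /andP [xB yB]].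
  + left; exists B => //; by rewrite xB yB.
  + right; split; exact: cU.
- case.
  + move=> [B BS /andP [xB yB]].
    case hab: ((a \in B) || (b \in B)).
    * exists (\bigcup_(B <- S | (a \in B) || (b \in B)) B)%fset; first by apply/in_mergeS; right.
      apply/andP; split; apply/in_bigU; exists B => //; by rewrite hab ?xB ?yB.
    * exists B; last by rewrite xB yB.
      apply/in_mergeS; left; move/negbT: hab; rewrite negb_or => /andP [h1 h2]; by [].
  + move=> [hx hy]; exists (\bigcup_(B <- S | (a \in B) || (b \in B)) B)%fset; first by apply/in_mergeS; right.
    by rewrite !Uc.
Qed.

Lemma pone_part : is_partition 1 pone.
Proof.
rewrite /pone; split; [|split; [|split]].
- move=> B; rewrite in_fset1 => /eqP ->; apply/fset0Pn; exists 1; by rewrite in_fset1.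
- move=> B; rewrite in_fset1 => /eqP -> x; rewrite in_fset1 => /eqP ->; done.
- move=> x /andP [h1 h2]; exists [fset 1]%fset; first by rewrite in_fset1.
  rewrite in_fset1; apply/eqP; lia.
- move=> B C x; rewrite !in_fset1 => /eqP -> /eqP -> //.
Qed.

Lemma pone_sb x y : sb pone x y <-> x = 1 /\ y = 1.
Proof.
split.
- move=> [B]; rewrite in_fset1 => /eqP ->; rewrite !in_fset1 => /andP [/eqP -> /eqP ->]; done.
- move=> [-> ->]; exists [fset 1]%fset; first by rewrite in_fset1.
  by rewrite !in_fset1 eqxx.
Qed.

Lemma pmerge1_part l Q : is_partition l Q -> is_partition l.+1 (pmerge 1 l pone Q).
Proof.
move=> hQ; rewrite /pmerge /=; case: eqP => [->|hl]; first exact: pone_part.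
have h := pconcat_part pone_part hQ.
apply: (merge_part (1 + l)%N h) => //.
Qed.

Lemma pmerge1_sb l Q : is_partition l Q -> req l.+1 (sb (pmerge 1 l pone Q)) (mrg l (sb Q)).
Proof.
move=> hQ x y h1 h2 h3 h4; rewrite /pmerge /=; case: eqP => [E|hl].
- subst l; have -> : x = 1 by lia. have -> : y = 1 by lia.
  rewrite /mrg /=; split => // _; exact/pone_sb.
have hS := pconcat_part pone_part hQ.
have hm := merge_sb (1 + l)%N hS (isT : 0 < 1) (leq_addr _ _).
change (sb (mergeS 1 (1 + l) (pconcat 1 pone Q)) x y <-> mrg l (sb Q) x y).
rewrite hm //.
have cS : forall u v, sb (pconcat 1 pone Q) u v <-> rcat 1 (sb pone) (sb Q) u v.
  move=> u v; exact: pconcat_sb pone_part hQ u v.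
have e1 : forall u, 0 < u -> u <= l.+1 -> (sb (pconcat 1 pone Q) u 1 <-> u = 1).
  move=> u u1 u2; rewrite cS /rcat; split.
  - case=> [[? [? /pone_sb [? ?]]]|[? [? ?]]]; lia.
  - move=> ->; left; split => //; split => //; exact/pone_sb.
have e2 : forall u, 0 < u -> u <= l.+1 -> (sb (pconcat 1 pone Q) u (1 + l) <-> 1 < u /\ sb Q (u - 1) l).
  move=> u u1 u2; rewrite cS /rcat; split.
  - case=> [[? [? /pone_sb [? ?]]]|[? [? H]]]; first lia.
    split => //; by rewrite addKn in H.
  - move=> [? H]; right; split => //; split; first lia; by rewrite addKn.
have e3 : forall u v, sb (pconcat 1 pone Q) u v <-> (u = 1 /\ v = 1) \/ (1 < u /\ 1 < v /\ sb Q (u - 1) (v - 1)).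
  move=> u v; rewrite cS /rcat; split.
  - case=> [[? [? /pone_sb [? ?]]]|[? [? H]]]; [left|right] => //.
  - case=> [[-> ->]|H]; [left|by right]; split => //; split => //; exact/pone_sb.
rewrite e1 // e2 // e1 // e2 // e3.
have tQ := sb_trans hQ. have sQ := @sb_sym Q.
have rQ : sb Q l l by apply: (sb_refl hQ); lia.
mcase x; mcase y; split; intuition; try lia.
- right; split; [by left| right; split => //; lia].
- right; split; [right; split => //; lia| by left].
- eapply tQ; [eassumption| apply sQ; eassumption].
- left; right; split; [lia|split; [lia|done]].
Qed.

Definition oddB (V : {fset nat}) : {fset nat} := [fset ((2 * i).-1)%N | i in V]%fset.
Definition evenB (W : {fset nat}) : {fset nat} := [fset (2 * i)%N | i in W]%fset.

Lemma pcupE P Q : pcup P Q = ([fset oddB V | V : {fset nat} in P] `|` [fset evenB W | W : {fset nat} in Q])%fset.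
Proof. by []. Qed.

Lemma in_pcup P Q B : B \in pcup P Q <->
  (exists2 V, V \in P & B = oddB V) \/ (exists2 W, W \in Q & B = evenB W).
Proof.
rewrite pcupE in_fsetU; split.
- case/orP => /imfsetP [V VP ->]; [left|right]; by exists V.
- case=> [[V VP ->]|[W WQ ->]]; apply/orP; [left|right]; apply/imfsetP; by [exists V|exists W].
Qed.

Lemma in_oddB V x : x \in oddB V <-> exists2 i, i \in V & x = (2 * i).-1.
Proof.
split; first by move/imfsetP => [i iV ->]; exists i.
by move=> [i iV ->]; apply/imfsetP; exists i.
Qed.

Lemma in_evenB W x : x \in evenB W <-> exists2 i, i \in W & x = 2 * i.
Proof.
split; first by move/imfsetP => [i iV ->]; exists i.
by move=> [i iV ->]; apply/imfsetP; exists i.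
Qed.

Lemma pcup_part n P Q : is_partition n P -> is_partition n Q -> is_partition (2 * n) (pcup P Q).
Proof.
move=> [ne [rg [cov dj]]] [ne' [rg' [cov' dj']]]; split; [|split; [|split]].
- move=> B /in_pcup [[V VP ->]|[W WQ ->]].
  + have /fset0Pn [x xV] := ne V VP; apply/fset0Pn; exists (2 * x).-1; apply/in_oddB; by exists x.
  + have /fset0Pn [x xV] := ne' W WQ; apply/fset0Pn; exists (2 * x); apply/in_evenB; by exists x.
- move=> B /in_pcup [[V VP ->]|[W WQ ->]] x.
  + move=> /in_oddB [i iV ->]; move: (rg V VP i iV) => /andP [? ?]; apply/andP; lia.
  + move=> /in_evenB [i iV ->]; move: (rg' W WQ i iV) => /andP [? ?]; apply/andP; lia.
- move=> x /andP [h1 h2].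
  have [i [i1 [i2 [E|E]]]] : exists i, 0 < i /\ i <= n /\ (x = (2*i).-1 \/ x = 2*i).
    exists ((x+1) %/ 2); lia.
  + have [V VP iV] := cov i (introT andP (conj i1 i2)).
    exists (oddB V); first by apply/in_pcup; left; exists V.
    apply/in_oddB; by exists i.
  + have [V VP iV] := cov' i (introT andP (conj i1 i2)).
    exists (evenB V); first by apply/in_pcup; right; exists V.
    apply/in_evenB; by exists i.
- move=> B C x /in_pcup [[V VP ->]|[W WQ ->]] /in_pcup [[V' VP' ->]|[W' WQ' ->]].
  + move=> /in_oddB [i iV ->] /in_oddB [j jV E].
    move: (rg V VP i iV) (rg V' VP' j jV) => /andP [? ?] /andP [? ?].
    have ij : i = j by lia.
    subst j; by rewrite (dj _ _ _ VP VP' iV jV).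
  + move=> /in_oddB [i iV ->] /in_evenB [j jV E].
    move: (rg V VP i iV) => /andP [? ?]; lia.
  + move=> /in_evenB [i iV ->] /in_oddB [j jV E].
    move: (rg V' VP' j jV) => /andP [? ?]; lia.
  + move=> /in_evenB [i iV ->] /in_evenB [j jV E].
    have ij : i = j by lia.
    subst j; by rewrite (dj' _ _ _ WQ WQ' iV jV).
Qed.

Lemma pcup_oo n P Q i j : is_partition n P -> 0 < i -> 0 < j ->
  (sb (pcup P Q) (2 * i).-1 (2 * j).-1 <-> sb P i j).
Proof.
move=> [_ [rg _]] i1 j1; split.
- move=> [B /in_pcup [[V VP ->]|[W WQ ->]] /andP [h1 h2]].
  + move: h1 h2 => /in_oddB [i' iV E1] /in_oddB [j' jV E2].
    move: (rg V VP i' iV) (rg V VP j' jV) => /andP [? ?] /andP [? ?].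
    have ii : i = i' by lia. have jj : j = j' by lia. subst i' j'.
    by exists V => //; rewrite iV jV.
  + move: h1 => /in_evenB [i' _ E]; lia.
- move=> [V VP /andP [iV jV]]; exists (oddB V); first by apply/in_pcup; left; exists V.
  apply/andP; split; apply/in_oddB; by [exists i|exists j].
Qed.

Lemma pcup_ee n P Q i j : is_partition n Q -> 0 < i -> 0 < j ->
  (sb (pcup P Q) (2 * i) (2 * j) <-> sb Q i j).
Proof.
move=> [_ [rg _]] i1 j1; split.
- move=> [B /in_pcup [[V VP ->]|[W WQ ->]] /andP [h1 h2]].
  + move: h1 => /in_oddB [i' _ E]; lia.
  + move: h1 h2 => /in_evenB [i' iV E1] /in_evenB [j' jV E2].
    have ii : i = i' by lia. have jj : j = j' by lia. subst i' j'.
    by exists W => //; rewrite iV jV.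
- move=> [V VP /andP [iV jV]]; exists (evenB V); first by apply/in_pcup; right; exists V.
  apply/andP; split; apply/in_evenB; by [exists i|exists j].
Qed.

Lemma pcup_oe n P Q i j : is_partition n P -> 0 < i -> 0 < j ->
  ~ sb (pcup P Q) (2 * i).-1 (2 * j).
Proof.
move=> [_ [rg _]] i1 j1 [B /in_pcup [[V VP ->]|[W WQ ->]] /andP [h1 h2]].
- move: h1 h2 => /in_oddB [i' iV E1] /in_oddB [j' jV E2].
  move: (rg V VP j' jV) => /andP [? ?]; lia.
- move: h1 => /in_evenB [i' _ E]; lia.
Qed.

Fixpoint Ph (t : tree) : nat -> nat -> Prop :=
  match t with
  | Leaf => fun _ _ => False
  | Node s u => rcat (tree_size s) (Ph s) (mrg (tree_size u) (Ph u))
  end.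

Fixpoint PQ (t : tree) : (nat -> nat -> Prop) * (nat -> nat -> Prop) :=
  match t with
  | Leaf => (fun _ _ => False, fun _ _ => False)
  | Node s u => (rcat (tree_size s).+1 (mrg (tree_size s) (PQ s).2) (PQ u).1,
                 rcat (tree_size s) (PQ s).1 (mrg (tree_size u) (PQ u).2))
  end.

Fixpoint PQt (t : tree) : setpart * setpart :=
  match t with
  | Leaf => (fset0, fset0)
  | Node s u => (pconcat (tree_size s).+1 (pmerge 1 (tree_size s) pone (PQt s).2) (PQt u).1,
                 pconcat (tree_size s) (PQt s).1 (pmerge 1 (tree_size u) pone (PQt u).2))
  end.

Lemma part0 : is_partition 0 fset0.
Proof.
split; [|split; [|split]] => //.
- move=> x /andP [? ?]; lia.
Qed.

Lemma req_trans n r s q : req n r s -> req n s q -> req n r q.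
Proof. move=> E1 E2 x y h1 h2 h3 h4; rewrite E1 // E2 //. Qed.

Lemma req_sym n r s : req n r s -> req n s r.
Proof. move=> E x y h1 h2 h3 h4; rewrite E //. Qed.

Lemma sizeA k l : (k + l).+1 = k + l.+1. Proof. by rewrite addnS. Qed.
Lemma sizeB k l : (k + l).+1 = k.+1 + l. Proof. by rewrite addSn. Qed.

Lemma phi_ok t : is_partition (tree_size t) (phi t) /\ req (tree_size t) (sb (phi t)) (Ph t).
Proof.
elim: t => [|s [hs Es] u [hu Eu]] /=.
- split; first exact: part0.
  move=> x y h1 h2; lia.
- rewrite sizeA; split; first exact: pconcat_part hs (pmerge1_part hu).
  apply: req_trans.
  + move=> x y _ _ _ _; exact: pconcat_sb hs (pmerge1_part hu) x y.
  + apply: cat_req Es _; apply: req_trans (pmerge1_sb hu) _; exact: mrg_req.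
Qed.

Lemma Ph_good t : good (tree_size t) (Ph t).
Proof.
elim: t => [|s hs u hu] /=.
- split; [|split; [|split]] => *; lia.
- rewrite sizeA; apply: cat_good hs (mrg_good hu).
Qed.

Definition Pr t := (PQ t).1.
Definition Qr t := (PQ t).2.
Definition Pt t := (PQt t).1.
Definition Qt t := (PQt t).2.

Lemma PQ_good t : good (tree_size t) (Pr t) /\ good (tree_size t) (Qr t).
Proof.
rewrite /Pr /Qr; elim: t => [|s [hs1 hs2] u [hu1 hu2]] /=.
- split; split; [|split; [|split]| |split; [|split]] => *; lia.
- split.
  + rewrite sizeB; apply: cat_good (mrg_good hs2) hu1.
  + rewrite sizeA; apply: cat_good hs1 (mrg_good hu2).
Qed.

Lemma PQt_ok t : is_partition (tree_size t) (Pt t) /\ is_partition (tree_size t) (Qt t) /\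
  req (tree_size t) (sb (Pt t)) (Pr t) /\ req (tree_size t) (sb (Qt t)) (Qr t).
Proof.
rewrite /Pr /Qr /Pt /Qt; elim: t => [|s [hs1 [hs2 [Es1 Es2]]] u [hu1 [hu2 [Eu1 Eu2]]]] /=.
- split; first exact: part0. split; first exact: part0.
  split; move=> x y h1 h2; lia.
- split; first by rewrite sizeB; exact: pconcat_part (pmerge1_part hs2) hu1.
  split; first by rewrite sizeA; exact: pconcat_part hs1 (pmerge1_part hu2).
  split.
  + rewrite sizeB; apply: req_trans.
    * move=> x y _ _ _ _; exact: pconcat_sb (pmerge1_part hs2) hu1 x y.
    * apply: cat_req Eu1; apply: req_trans (pmerge1_sb hs2) _; exact: mrg_req.
  + rewrite sizeA; apply: req_trans.
    * move=> x y _ _ _ _; exact: pconcat_sb hs1 (pmerge1_part hu2) x y.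
    * apply: cat_req Es1 _; apply: req_trans (pmerge1_sb hu2) _; exact: mrg_req.
Qed.

Lemma size_Rt t : tree_size (Rt t) = 2 * tree_size t.
Proof. elim: t => [|s hs u hu] //=; rewrite hs hu; lia. Qed.

Definition IHP n (Ph' P' Q' : nat -> nat -> Prop) : Prop :=
  forall i j, 0 < i -> i <= n -> 0 < j -> j <= n ->
   (Ph' (2 * i).-1 (2 * j).-1 <-> P' i j) /\ (Ph' (2 * i) (2 * j) <-> Q' i j) /\
   ~ Ph' (2 * i).-1 (2 * j) /\ ~ Ph' (2 * i) (2 * j).-1.

Lemma ne1 x : 1 < x -> (x == 1) = false.
Proof. move=> h; apply/eqP; lia. Qed.

Lemma mrg_odd n Ph' P' Q' : IHP n Ph' P' Q' -> forall i j, 0 < i -> i <= n.+1 -> 0 < j -> j <= n.+1 ->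
  (mrg (2 * n) Ph' (2 * i).-1 (2 * j).-1 <-> mrg n Q' i j).
Proof.
move=> IH i j h1 h2 h3 h4; rewrite /mrg.
have [->|hi] := eqVneq i 1; have [->|hj] := eqVneq j 1; rewrite /= ?eqxx ?(negbTE hi) ?(negbTE hj) //.
- rewrite (ne1 (_ : 1 < (2 * j).-1)); last lia.
  have -> : (2 * j).-1 - 1 = 2 * (j - 1) by lia.
  apply: (IH _ _ _ _ _ _).2.1; lia.
- rewrite (ne1 (_ : 1 < (2 * i).-1)); last lia.
  have -> : (2 * i).-1 - 1 = 2 * (i - 1) by lia.
  apply: (IH _ _ _ _ _ _).2.1; lia.
- rewrite (ne1 (_ : 1 < (2 * i).-1)); last lia.
  rewrite (ne1 (_ : 1 < (2 * j).-1)); last lia.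
  have -> : (2 * i).-1 - 1 = 2 * (i - 1) by lia.
  have -> : (2 * j).-1 - 1 = 2 * (j - 1) by lia.
  apply: (IH _ _ _ _ _ _).2.1; lia.
Qed.

Lemma mrg_even n Ph' P' Q' : IHP n Ph' P' Q' -> forall i j, 0 < i -> i <= n -> 0 < j -> j <= n ->
  (mrg (2 * n) Ph' (2 * i) (2 * j) <-> P' i j).
Proof.
move=> IH i j h1 h2 h3 h4; rewrite /mrg.
rewrite (ne1 (_ : 1 < 2 * i)); last lia.
rewrite (ne1 (_ : 1 < 2 * j)); last lia.
have -> : 2 * i - 1 = (2 * i).-1 by lia.
have -> : 2 * j - 1 = (2 * j).-1 by lia.
apply: (IH _ _ _ _ _ _).1; lia.
Qed.

Lemma mrg_cross n Ph' P' Q' : IHP n Ph' P' Q' -> forall i j, 0 < i -> i <= n.+1 -> 0 < j -> j <= n ->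
  ~ mrg (2 * n) Ph' (2 * i).-1 (2 * j) /\ ~ mrg (2 * n) Ph' (2 * j) (2 * i).-1.
Proof.
move=> IH i j h1 h2 h3 h4; rewrite /mrg.
rewrite (ne1 (_ : 1 < 2 * j)); last lia.
have -> : 2 * j - 1 = (2 * j).-1 by lia.
have [->|hi] := eqVneq i 1; rewrite /= ?eqxx.
- have [_ [_ [H _]]] := IH j n ltac:(lia) ltac:(lia) ltac:(lia) ltac:(lia).
  by split.
- rewrite (ne1 (_ : 1 < (2 * i).-1)); last lia.
  have -> : (2 * i).-1 - 1 = 2 * (i - 1) by lia.
  have [_ [_ [_ H1]]] := IH (i - 1) j ltac:(lia) ltac:(lia) ltac:(lia) ltac:(lia).
  have [_ [_ [H2 _]]] := IH j (i - 1) ltac:(lia) ltac:(lia) ltac:(lia) ltac:(lia).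
  by split.
Qed.

Lemma rcat_l m r s x y : x <= m -> y <= m -> (rcat m r s x y <-> r x y).
Proof. move=> h1 h2; rewrite /rcat; split; [case=> [[? [? ?]]|[? [? ?]]] //; lia|by left]. Qed.

Lemma rcat_r m r s x y : m < x -> m < y -> (rcat m r s x y <-> s (x - m) (y - m)).
Proof. move=> h1 h2; rewrite /rcat; split; [case=> [[? [? ?]]|[? [? ?]]] //; lia|by right]. Qed.

Lemma rcat_x m r s x y : (x <= m /\ m < y) \/ (m < x /\ y <= m) -> ~ rcat m r s x y.
Proof. rewrite /rcat; move=> H [[? [? ?]]|[? [? ?]]]; lia. Qed.

Lemma PhR_node s u x y : 0 < x -> 0 < y ->
  (Ph (Rt (Node s u)) x y <->
   rcat (2 * tree_size s).+1 (mrg (2 * tree_size s) (Ph (Rt s))) (mrg (2 * tree_size u) (Ph (Rt u))) x y).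
Proof.
move=> h1 h2; rewrite /= !size_Rt add0n /rcat !subn0.
split; case=> [[? [? H]]|H]; try (by right); left; split => //; split => //.
- case: H => [[? [? ?]]|[? [? ?]]] //; lia.
- by right.
Qed.

Lemma R3 t : IHP (tree_size t) (Ph (Rt t)) (Pr t) (Qr t).
Proof.
elim: t => [|s IHs u IHu].
- rewrite /IHP /= => i j *; lia.
move=> i j h1 h2 h3 h4.
rewrite !PhR_node; try lia.
set k := tree_size s in h2 h4 *; set l := tree_size u in h2 h4 *.
rewrite /Pr /Qr /=; fold (Pr s) (Qr s) (Pr u) (Qr u); fold k l.
have {h2} h2 : i <= (k + l).+1 by [].
have {h4} h4 : j <= (k + l).+1 by [].
split; [|split; [|split]].
- case: (leqP i k.+1) => hi; case: (leqP j k.+1) => hj.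
  + rewrite rcat_l; try lia. rewrite rcat_l; try lia.
    exact: mrg_odd IHs _ _ _ _ _ _.
  + split => H; exfalso; move: H; apply: rcat_x; lia.
  + split => H; exfalso; move: H; apply: rcat_x; lia.
  + rewrite rcat_r; try lia. rewrite rcat_r; try lia.
    have -> : (2 * i).-1 - (2 * k).+1 = 2 * (i - k.+1) by lia.
    have -> : (2 * j).-1 - (2 * k).+1 = 2 * (j - k.+1) by lia.
    apply: mrg_even IHu _ _ _ _ _ _; lia.
- case: (leqP i k) => hi; case: (leqP j k) => hj.
  + rewrite rcat_l; try lia. rewrite rcat_l; try lia.
    apply: mrg_even IHs _ _ _ _ _ _; lia.
  + split => H; exfalso; move: H; apply: rcat_x; lia.
  + split => H; exfalso; move: H; apply: rcat_x; lia.
  + rewrite rcat_r; try lia. rewrite rcat_r; try lia.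
    have -> : 2 * i - (2 * k).+1 = (2 * (i - k)).-1 by lia.
    have -> : 2 * j - (2 * k).+1 = (2 * (j - k)).-1 by lia.
    apply: mrg_odd IHu _ _ _ _ _ _; lia.
- case: (leqP i k.+1) => hi; case: (leqP j k) => hj.
  + rewrite rcat_l; try lia.
    apply: (mrg_cross IHs _ _ _ _).1; lia.
  + apply: rcat_x; lia.
  + apply: rcat_x; lia.
  + rewrite rcat_r; try lia.
    have -> : (2 * i).-1 - (2 * k).+1 = 2 * (i - k.+1) by lia.
    have -> : 2 * j - (2 * k).+1 = (2 * (j - k)).-1 by lia.
    apply: (mrg_cross IHu _ _ _ _).2; lia.
- case: (leqP i k) => hi; case: (leqP j k.+1) => hj.
  + rewrite rcat_l; try lia.
    apply: (mrg_cross IHs _ _ _ _).2; lia.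
  + apply: rcat_x; lia.
  + apply: rcat_x; lia.
  + rewrite rcat_r; try lia.
    have -> : (2 * j).-1 - (2 * k).+1 = 2 * (j - k.+1) by lia.
    have -> : 2 * i - (2 * k).+1 = (2 * (i - k)).-1 by lia.
    apply: (mrg_cross IHu _ _ _ _).1; lia.
Qed.

Definition closed (r : nat -> nat -> Prop) n a b :=
  forall x y, a <= x -> x <= b -> 0 < y -> y <= n -> r x y -> a <= y /\ y <= b.

Lemma PrN s u : Pr (Node s u) = rcat (tree_size s).+1 (mrg (tree_size s) (Qr s)) (Pr u).
Proof. by []. Qed.
Lemma QrN s u : Qr (Node s u) = rcat (tree_size s) (Pr s) (mrg (tree_size u) (Qr u)).
Proof. by []. Qed.

Lemma K1 t :
 (forall i j, 0 < i -> i < j -> j <= tree_size t -> closed (Pr t) (tree_size t) i.+1 j -> Qr t i j) /\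
 (forall i j, 0 < i -> i < j -> j <= tree_size t -> closed (Qr t) (tree_size t) i j.-1 -> Pr t i j).
Proof.
elim: t => [|s [IHsa IHsb] u [IHua IHub]].
- split => i j /= *; lia.
have [[rPs [sPs _]] [rQs [sQs _]]] := PQ_good s.
have [[rPu [sPu _]] [rQu [sQu _]]] := PQ_good u.
have -> : tree_size (Node s u) = (tree_size s + tree_size u).+1 by [].
rewrite PrN QrN.
set k := tree_size s in IHsa IHsb rPs sPs rQs sQs *.
set l := tree_size u in IHua IHub rPu sPu rQu sQu *.
set P := rcat k.+1 (mrg k (Qr s)) (Pr u).
set Q := rcat k (Pr s) (mrg l (Qr u)).
have FP1 : forall x y, 0 < x -> x <= k -> 0 < y -> y <= k -> Qr s x y -> P x.+1 y.+1.
  move=> x y *; rewrite /P rcat_l; try lia.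
  by rewrite /mrg /= !ne1 //= !subn1.
have FP2 : forall x y, 0 < x -> x <= l -> 0 < y -> y <= l -> Pr u x y -> P (x + k.+1) (y + k.+1).
  move=> x y *; rewrite /P rcat_r; try lia. by rewrite !addnK.
have FP3 : P k.+1 1.
  rewrite /P rcat_l; try lia. rewrite /mrg eqxx.
  case: (eqVneq k 0) => [->//|hk]. rewrite ne1; last lia.
  rewrite subn1 /=; apply: rQs; lia.
have FQ1 : forall x y, 0 < x -> x <= k -> 0 < y -> y <= k -> Pr s x y -> Q x y.
  move=> x y *; rewrite /Q rcat_l //.
have FQ2 : forall x y, 0 < x -> x <= l -> 0 < y -> y <= l -> Qr u x y -> Q (x + k.+1) (y + k.+1).
  move=> x y *; rewrite /Q rcat_r; try lia.
  have -> : x + k.+1 - k = x.+1 by lia.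
  have -> : y + k.+1 - k = y.+1 by lia.
  by rewrite /mrg /= !ne1 //= !subn1.
have FQ3 : Q k.+1 (k + l).+1.
  rewrite /Q rcat_r; try lia.
  have -> : k.+1 - k = 1 by lia.
  have -> : (k + l).+1 - k = l.+1 by lia.
  rewrite /mrg eqxx. case: (eqVneq l 0) => [->//|hl]. rewrite ne1; last lia.
  rewrite subn1 /=; apply: rQu; lia.
split.
- move=> i j h1 h2 h3 cl.
  case: (leqP j k) => hj.
  + rewrite /Q rcat_l; try lia.
    apply: IHsb; try lia.
    move=> x y hx1 hx2 hy1 hy2 H.
    have := cl x.+1 y.+1 ltac:(lia) ltac:(lia) ltac:(lia) ltac:(lia) (FP1 x y ltac:(lia) ltac:(lia) hy1 hy2 H).
    lia.
  case: (leqP k.+1 i) => hi.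
  + rewrite /Q rcat_r; try lia.
    case: (eqVneq i k.+1) => [Ei|ne].
    * subst i. have -> : k.+1 - k = 1 by lia.
      rewrite /mrg eqxx ne1; last lia.
      case: (eqVneq j (k + l).+1) => [Ej|nej].
      - subst j. have -> : (k + l).+1 - k - 1 = l by lia. apply: rQu; lia.
      apply: IHua; try lia.
      move=> x y hx1 hx2 hy1 hy2 H; split => //.
      case: (leqP (j - k) y) => hy; first lia.
      have := cl (y + k.+1) (x + k.+1) ltac:(lia) ltac:(lia) ltac:(lia) ltac:(lia)
                 (FP2 y x hy1 hy2 ltac:(lia) ltac:(lia) (sPu x y ltac:(lia) ltac:(lia) hy1 hy2 H)).
      lia.
    * rewrite /mrg !ne1; try lia.
      have -> : i - k - 1 = i - k.+1 by lia.
      have -> : j - k - 1 = j - k.+1 by lia.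
      apply: IHua; try lia.
      move=> x y hx1 hx2 hy1 hy2 H.
      have := cl (x + k.+1) (y + k.+1) ltac:(lia) ltac:(lia) ltac:(lia) ltac:(lia)
                 (FP2 x y ltac:(lia) ltac:(lia) hy1 hy2 H).
      lia.
  + have := cl k.+1 1 ltac:(lia) ltac:(lia) ltac:(lia) ltac:(lia) FP3. lia.
- move=> i j h1 h2 h3 cl.
  case: (leqP j k.+1) => hj.
  + rewrite /P rcat_l; try lia.
    case: (eqVneq i 1) => [Ei|ne].
    * subst i. rewrite /mrg eqxx ne1; last lia.
      case: (eqVneq j k.+1) => [Ej|nej].
      - subst j. rewrite subn1 /=; apply: rQs; lia.
      apply: IHsa; try lia.
      move=> x y hx1 hx2 hy1 hy2 H; split => //.
      case: (leqP (j - 1).+1 y) => hy; first lia.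
      have := cl y x ltac:(lia) ltac:(lia) ltac:(lia) ltac:(lia)
                 (FQ1 y x hy1 ltac:(lia) ltac:(lia) ltac:(lia) (sPs x y ltac:(lia) ltac:(lia) hy1 hy2 H)).
      lia.
    * rewrite /mrg !ne1; try lia.
      have -> : j - 1 = (j - 1).-1.+1 by lia.
      apply: IHsa; try lia.
      move=> x y hx1 hx2 hy1 hy2 H.
      have := cl x y ltac:(lia) ltac:(lia) ltac:(lia) ltac:(lia)
                 (FQ1 x y ltac:(lia) ltac:(lia) hy1 hy2 H).
      lia.
  case: (leqP k.+2 i) => hi.
  + rewrite /P rcat_r; try lia.
    apply: IHub; try lia.
    move=> x y hx1 hx2 hy1 hy2 H.
    have := cl (x + k.+1) (y + k.+1) ltac:(lia) ltac:(lia) ltac:(lia) ltac:(lia)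
               (FQ2 x y ltac:(lia) ltac:(lia) hy1 hy2 H).
    lia.
  + have := cl k.+1 (k + l).+1 ltac:(lia) ltac:(lia) ltac:(lia) ltac:(lia) FQ3. lia.
Qed.

Lemma Kmax t P Q' : is_partition (tree_size t) P -> is_partition (tree_size t) Q' ->
  req (tree_size t) (sb P) (Pr t) -> noncrossing (pcup P Q') ->
  forall i j, 0 < i -> i <= tree_size t -> 0 < j -> j <= tree_size t -> sb Q' i j -> Qr t i j.
Proof.
move=> hP hQ EP nc.
have [_ [rQ [sQ _]]] := PQ_good t.
have main : forall i j, 0 < i -> i < j -> j <= tree_size t -> sb Q' i j -> Qr t i j.
  move=> i j h1 h2 h3 H.
  apply: (K1 t).1 => // x y hx1 hx2 hy1 hy2 Hxy.
  have Hp : sb (pcup P Q') (2 * x).-1 (2 * y).-1.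
    apply/(pcup_oo _ hP); try lia. apply/EP => //; lia.
  have Hq : sb (pcup P Q') (2 * i) (2 * j) by apply/(pcup_ee _ hQ); try lia.
  case: (leqP y i) => hyi.
    have := nc_sb nc (_ : (2 * y).-1 < 2 * i) (_ : 2 * i < (2 * x).-1) (_ : (2 * x).-1 < 2 * j)
       (sb_sym Hp) Hq.
    move=> /(_ ltac:(lia) ltac:(lia) ltac:(lia)) HH; exfalso; apply: (pcup_oe hP _ _ HH); lia.
  case: (leqP y j) => hyj; first lia.
  have := nc_sb nc (_ : 2 * i < (2 * x).-1) (_ : (2 * x).-1 < 2 * j) (_ : 2 * j < (2 * y).-1) Hq Hp.
  move=> /(_ ltac:(lia) ltac:(lia) ltac:(lia)) /sb_sym HH; exfalso; apply: (pcup_oe hP _ _ HH); lia.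
move=> i j h1 h2 h3 h4 H.
case: (ltngtP i j) => hij.
- exact: main.
- apply: sQ => //; apply: main => //; exact: sb_sym.
- subst j; exact: rQ.
Qed.

Lemma maxP (p : nat -> Prop) n : p 1 -> 0 < n ->
  exists m, 0 < m /\ m <= n /\ p m /\ forall y, m < y -> y <= n -> ~ p y.
Proof.
move=> p1; elim: n => [|n IH] h; first lia.
case: (eqVneq n 0) => [->|hn].
  exists 1; do 3 (split => //); move=> y *; lia.
case: (classic (p n.+1)) => H.
- exists n.+1; do 3 (split => //); move=> y *; lia.
- have [m [m1 [m2 [pm hm]]]] := IH ltac:(lia).
  exists m; do 3 (split => //; try lia); move=> y h1 h2.
  case: (eqVneq y n.+1) => [->//|ne]; apply: hm; lia.
Qed.

Lemma minP (p : nat -> Prop) n : p n -> 0 < n ->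
  exists m, 0 < m /\ m <= n /\ p m /\ forall y, 0 < y -> y < m -> ~ p y.
Proof.
move=> pn hn.
suff : forall q, (exists2 m, 0 < m /\ m <= q & p m) ->
  exists m, 0 < m /\ m <= q /\ p m /\ forall y, 0 < y -> y < m -> ~ p y.
  move=> /(_ n) [|m [? [? [? ?]]]]; first by exists n.
  by exists m.
elim=> [|q IH] [m [m1 m2] pm]; first lia.
case: (classic (exists2 m, 0 < m /\ m <= q & p m)) => H.
- have [m' [? [? [? ?]]]] := IH H; exists m'; do 3 (split => //; try lia).
- exists q.+1; have E : m = q.+1.
    case: (eqVneq m q.+1) => // ne; exfalso; apply: H; exists m => //; lia.
  subst m; do 3 (split => //); move=> y h1 h2 py; apply: H; exists y => //; lia.
Qed.

Lemma good_shift n r a b : good n r -> a + b <= n ->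
  good b (fun x y => r (x + a) (y + a)).
Proof.
move=> [rf [sy [tr nc]]] h; split; [|split; [|split]].
- move=> x *; apply: rf; lia.
- move=> x y *; apply: (sy) => //; lia.
- move=> x y z h1 h2 h3 h4 h5 h6 H1 H2; apply: tr H1 H2; lia.
- move=> x y z w h1 h2 h3 h4 h5 H1 H2; apply: nc H1 H2; lia.
Qed.

Lemma good_le n r b : good n r -> b <= n -> good b r.
Proof.
move=> [rf [sy [tr nc]]] h; split; [|split; [|split]].
- move=> x *; apply: rf; lia.
- move=> x y *; apply: (sy) => //; lia.
- move=> x y z h1 h2 h3 h4 h5 h6 H1 H2; apply: tr H1 H2; lia.
- move=> x y z w h1 h2 h3 h4 h5 H1 H2; apply: nc H1 H2; lia.
Qed.

Lemma surj N : forall n, n <= N -> forall r, good n r ->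
  (exists t, tree_size t = n /\ req n (Pr t) r) /\ (exists t, tree_size t = n /\ req n (Qr t) r).
Proof.
elim: N => [|N IH] n hn r gr.
  have -> : n = 0 by lia.
  split; exists Leaf; split => // x y *; lia.
case: (eqVneq n 0) => [->|hn0].
  split; exists Leaf; split => // x y *; lia.
have gr0 := gr; move: gr0 => [rf [sy [tr nc]]].
split.
- have [m [m1 [m2 [pm hm]]]] := @maxP (r 1) n (rf 1 isT ltac:(lia)) ltac:(lia).
  have gX := good_shift gr (_ : 1 + (m - 1) <= n); have {gX} gX := gX ltac:(lia).
  have gY := good_shift gr (_ : m + (n - m) <= n); have {gY} gY := gY ltac:(lia).
  have [_ [s [ss Es]]] := IH (m - 1) ltac:(lia) _ gX.
  have [[u [su Eu]] _] := IH (n - m) ltac:(lia) _ gY.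
  have cross : forall x y, 0 < x -> x <= m -> m < y -> y <= n -> ~ r x y.
    move=> x y h1 h2 h3 h4 H.
    case: (eqVneq x 1) => [Ex|nx].
      subst x; exact: (hm y h3 h4 H).
    case: (eqVneq x m) => [Ex|nxm].
      subst x; apply: (hm y h3 h4); apply: tr pm H; lia.
    have H1 : r 1 x by apply: nc pm H; lia.
    apply: (hm y h3 h4); apply: tr H1 H; lia.
  exists (Node s u); split; first by rewrite /= ss su; lia.
  move=> x y h1 h2 h3 h4; rewrite PrN ss.
  case: (leqP x m) => hx; case: (leqP y m) => hy.
  + rewrite rcat_l; try lia.
    rewrite (mrg_req Es); try lia.
    rewrite /mrg; have [Ex|nx] := eqVneq x 1; have [Ey|ny] := eqVneq y 1;
      rewrite ?Ex ?Ey ?eqxx ?(negbTE nx) ?(negbTE ny) /=.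
    * split => // _; apply: rf; lia.
    * have -> : y - 1 + 1 = y by lia.
      have -> : m - 1 + 1 = m by lia.
      split => H.
      -- apply: (sy) => //; try lia; apply: tr H (sy _ _ _ _ _ _ pm); lia.
      -- apply: tr (sy _ _ _ _ _ _ H) pm; lia.
    * have -> : x - 1 + 1 = x by lia.
      have -> : m - 1 + 1 = m by lia.
      split => H.
      -- apply: (tr x m 1) H (sy _ _ _ _ _ _ pm); lia.
      -- apply: tr H pm; lia.
    * have -> : x - 1 + 1 = x by lia.
      have -> : y - 1 + 1 = y by lia. done.
  + split => H; exfalso; [move: H; apply: rcat_x; lia|apply: (cross x y) => //; lia].
  + split => H; exfalso; [move: H; apply: rcat_x; lia|].
    apply: (cross y x) => //; try lia; apply: (sy) => //; lia.
  + have -> : (m - 1).+1 = m by lia.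
    rewrite rcat_r; try lia.
    rewrite Eu; try lia. rewrite !subnK //; lia.
- have [m [m1 [m2 [pm hm]]]] := @minP (fun y => r y n) n (rf n ltac:(lia) ltac:(lia)) ltac:(lia).
  have gX := good_le gr (_ : m - 1 <= n); have {gX} gX := gX ltac:(lia).
  have gY := good_shift gr (_ : m + (n - m) <= n); have {gY} gY := gY ltac:(lia).
  have [[s [ss Es]] _] := IH (m - 1) ltac:(lia) _ gX.
  have [_ [u [su Eu]]] := IH (n - m) ltac:(lia) _ gY.
  have cross : forall x y, 0 < x -> x < m -> m <= y -> y <= n -> ~ r x y.
    move=> x y h1 h2 h3 h4 H.
    case: (eqVneq y n) => [Ey|ny].
      subst y; exact: (hm x h1 h2 H).
    case: (eqVneq y m) => [Ey|nym].
      subst y; apply: (hm x h1 h2); apply: tr H pm; lia.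
    have H1 : r x m by apply: nc H pm; lia.
    apply: (hm x h1 h2); apply: tr H1 pm; lia.
  exists (Node s u); split; first by rewrite /= ss su; lia.
  move=> x y h1 h2 h3 h4; rewrite QrN ss su.
  case: (leqP x (m - 1)) => hx; case: (leqP y (m - 1)) => hy.
  + rewrite rcat_l; try lia. apply: Es; lia.
  + split => H; exfalso; [move: H; apply: rcat_x; lia|apply: (cross x y) => //; lia].
  + split => H; exfalso; [move: H; apply: rcat_x; lia|].
    apply: (cross y x) => //; try lia; apply: (sy) => //; lia.
  + rewrite rcat_r; try lia.
    rewrite (mrg_req Eu); try lia.
    rewrite /mrg; have [Ex|nx] := eqVneq (x - (m - 1)) 1; have [Ey|ny] := eqVneq (y - (m - 1)) 1;
      rewrite ?Ex ?Ey ?eqxx ?(negbTE nx) ?(negbTE ny) /=.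
    * have -> : x = y by lia. split => // _; apply: rf; lia.
    * have -> : x = m by lia.
      have -> : y - (m - 1) - 1 + m = y by lia.
      have -> : n - m + m = n by lia.
      split => H.
      -- apply: tr pm (sy _ _ _ _ _ _ H); lia.
      -- apply: tr (sy _ _ _ _ _ _ H) pm; lia.
    * have -> : y = m by lia.
      have -> : x - (m - 1) - 1 + m = x by lia.
      have -> : n - m + m = n by lia.
      split => H.
      -- apply: tr H (sy _ _ _ _ _ _ pm); lia.
      -- apply: tr H pm; lia.
    * have -> : x - (m - 1) - 1 + m = x by lia.
      have -> : y - (m - 1) - 1 + m = y by lia. done.
Qed.

Lemma dec2 x n : 0 < x -> x <= 2 * n -> exists i, 0 < i /\ i <= n /\ (x = (2 * i).-1 \/ x = 2 * i).
Proof. move=> h1 h2; exists ((x + 1) %/ 2); lia. Qed.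

Lemma NCP_of n P r : is_partition n P -> good n r -> req n (sb P) r -> NCP n P.
Proof.
move=> hP gr E; split => //; apply: (sb_nc hP).
have [_ [_ [_ nc]]] := good_req gr (req_sym E).
move=> a b c d h1 h2 h3 h4 h5 H1 H2; apply: nc H1 H2 => //.
Qed.

Lemma good_of_NCP n P : NCP n P -> good n (sb P).
Proof.
move=> [hP nc]; split; [|split; [|split]].
- move=> x h1 h2; exact: sb_refl hP h1 h2.
- move=> x y _ _ _ _; exact: sb_sym.
- move=> x y z _ _ _ _ _ _; exact: sb_trans hP.
- move=> a b c d _ h2 h3 h4 _; exact: nc_sb nc h2 h3 h4.
Qed.

Lemma E_eq t : phi (Rt t) = pcup (Pt t) (Qt t).
Proof.
have [hph Eph] := phi_ok (Rt t).
have [hP [hQ [EP EQ]]] := PQt_ok t.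
rewrite size_Rt in hph Eph.
have R := @R3 t.
apply: (part_eq hph (pcup_part hP hQ)) => x y h1 h2 h3 h4.
rewrite Eph //.
have [i [i1 [i2 Ex]]] := dec2 h1 h2.
have [j [j1 [j2 Ey]]] := dec2 h3 h4.
have [R1 [R2 [R3' R4]]] := R i j i1 i2 j1 j2.
case: Ex => ->; case: Ey => ->.
- rewrite R1 (pcup_oo _ hP) // EP //.
- split => H; exfalso; [exact: R3' H|exact: (pcup_oe hP i1 j1 H)].
- split => H; exfalso; [exact: R4 H|exact: (pcup_oe hP j1 i1 (sb_sym H))].
- rewrite R2 (pcup_ee _ hQ) // EQ //.
Qed.

Lemma phiR_NCP t : NCP (2 * tree_size t) (phi (Rt t)).
Proof.
have [hph Eph] := phi_ok (Rt t).
have g := Ph_good (Rt t).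
rewrite size_Rt in hph Eph g.
exact: NCP_of hph g Eph.
Qed.

Unset Implicit Arguments.
Theorem proposition3 (n : nat) (S : setpart) :
  (exists t : tree, tree_size t = n /\ phi (Rt t) = S) <->
  (exists P Q : setpart, NCP n P /\ is_kreweras n P Q /\ S = pcup P Q).
Proof.
split.
- move=> [t [<- <-]].
  have [hP [hQ [EP EQ]]] := PQt_ok t.
  have [gP gQ] := PQ_good t.
  exists (Pt t), (Qt t).
  split; first exact: NCP_of hP gP EP.
  split; last exact: E_eq.
  split; first exact: NCP_of hQ gQ EQ.
  split; first by rewrite -E_eq; exact: (phiR_NCP t).2.
  move=> Q' [hQ' _] nc.
  apply: (sb_refines hQ' hQ) => x y h1 h2 h3 h4 H.
  apply/(EQ x y h1 h2 h3 h4); exact: (Kmax hP hQ' EP nc h1 h2 h3 h4 H).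
- move=> [P [Q [hP [[hQ [ncK maxK]] ->]]]].
  have [[t [st Et]] _] := @surj n n (leqnn n) (sb P) (good_of_NCP hP).
  subst n.
  have [hPt [hQt [EPt EQt]]] := PQt_ok t.
  have PtP : Pt t = P.
    apply: (part_eq hPt hP.1); exact: req_trans EPt Et.
  have hPt' := hPt; rewrite PtP in EPt.
  have QtQ : Qt t = Q.
    apply: (part_eq hQt hQ.1) => x y h1 h2 h3 h4; split => H.
    + apply: refines_sb H; apply: maxK.
      * exact: NCP_of hQt (PQ_good t).2 EQt.
      * rewrite -PtP -E_eq; exact: (phiR_NCP t).2.
    + apply/(EQt x y h1 h2 h3 h4); exact: (Kmax hP.1 hQ.1 (req_sym Et) ncK h1 h2 h3 h4 H).
  exists t; split => //; by rewrite E_eq PtP QtQ.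
Qed.
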